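(* Let $s$ be a closed term with $s\succ^k t$ for some abstraction $t$. Then the heap machine satisfies $\sigma_s\succ^{4k+2}([],[g],H)$ for some closure $g$ and heap $H$ with $g\gg_H t$.
   Context: Terms (de Bruijn): $s::=n\mid st\mid\lambda s$; $s$ is closed if all its free de Bruijn indices are... none (i.e. every index $n$ occurring under $d$ binders satisfies $n<d$). Term substitution: $k^k_u=u$, $n^k_u=n$ ($n\ne k$), $(st)^k_u=(s^k_u)(t^k_u)$, $(\lambda s)^k_u=\lambda(s^{k+1}_u)$. Reduction: $(\lambda s)(\lambda t)\succ s^0_{\lambda t}$; $s\succ s'\Rightarrow st\succ s't$; $t\succ t'\Rightarrow(\lambda s)t\succ(\lambda s)t'$. Programs: lists of commands $\mathsf{ret},\mathsf{var}\,n,\mathsf{lam},\mathsf{app}$. Compilation: $\gamma n=[\mathsf{var}\,n]$, $\gamma(st)=\gamma s++\gamma t++[\mathsf{app}]$, $\gamma(\lambda s)=\mathsf{lam}::\gamma s++[\mathsf{ret}]$. $P\gg s$ iff $P=\gamma u$ and $s=\lambda u$. $\varphi P:=\varphi_{0,[]}P$ with $\varphi_{0,Q}(\mathsf{ret}::P)=(Q,P)$, $\varphi_{k+1,Q}(\mathsf{ret}::P)=\varphi_{k,Q++[\mathsf{ret}]}P$, $\varphi_{k,Q}(\mathsf{lam}::P)=\varphi_{k+1,Q++[\mathsf{lam}]}P$, $\varphi_{k,Q}(c::P)=\varphi_{k,Q++[c]}P$ for $c$ a $\mathsf{var}$ or $\mathsf{app}$, undefined otherwise. Addresses are natural numbers;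 a closure is a pair $(P,a)$ of a program and an address; a heap entry is a pair $(g,b)$ of a closure and an address; a heap $H$ is a list of heap entries; $H[a]$ is the $a$-th entry of $H$ for $1\le a\le|H|$ (undefined otherwise, in particular for $a=0$). Lookup: if $H[a]=(g,b)$ then $H[a,0]=g$ and $H[a,n+1]=H[b,n]$; otherwise $H[a,n]$ is undefined. Unfolding $\langle s,a\rangle\triangleright^H_k s'$ is defined inductively: $\langle n,a\rangle\triangleright^H_k n$ if $n<k$; $\langle n,a\rangle\triangleright^H_k s'$ if $n\ge k$, $H[a,n-k]=(P,b)$, $P\gg u$ and $\langle u,b\rangle\triangleright^H_0 s'$; $\langle\lambda s,a\rangle\triangleright^H_k\lambda s'$ if $\langle s,a\rangle\triangleright^H_{k+1}s'$; $\langle st,a\rangle\triangleright^H_k s't'$ if $\langle s,a\rangle\triangleright^H_k s'$ and $\langle t,a\rangle\triangleright^H_k t'$. A closure represents a term, $(P,a)\gg_H s$, iff $P\gg u$ and $\langle u,a\rangle\triangleright^H_0 s$ for some $u$. The heap machine has states $(T,V,H)$ with $T,V$ lists of closures and steps: $((\mathsf{var}\,n::P,a)::T,V,H)\succ((P,a)::T,g::V,H)$ if $H[a,n]=g$; $((\mathsf{lam}::P,a)::T,V,H)\succ((P',a)::T,(Q,a)::V,H)$ if $\varphi P=(Q,P')$; $((\mathsf{app}::P,a)::T,g::(Q,b)::V,H)\succ((Q,|H|+1)::(P,a)::T,V,H++[(g,b)])$; $(([],a)::T,V,H)\succ(T,V,H)$. The initial state is $\sigma_s:=([(\gamma s,0)],[],[])$.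 *)

(* Defs.v *)
From Stdlib Require Import List Arith Lia.
Import ListNotations.

Inductive term : Type :=
| var (n : nat)
| app (s t : term)
| lam (s : term).

Inductive bound : nat -> term -> Prop :=
| boundVar k n : n < k -> bound k (var n)
| boundApp k s t : bound k s -> bound k t -> bound k (app s t)
| boundLam k s : bound (S k) s -> bound k (lam s).

Definition closed (s : term) : Prop := bound 0 s.

Fixpoint subst (s : term) (k : nat) (u : term) : term :=
  match s with
  | var n => if Nat.eqb n k then u else var n
  | app s1 s2 => app (subst s1 k u) (subst s2 k u)
  | lam s1 => lam (subst s1 (S k) u)
  end.

Inductive step : term -> term -> Prop :=
| stepBeta s t : step (app (lam s) (lam t)) (subst s 0 (lam t))
| stepAppL s s' t : step s s' -> step (app s t) (app s' t)
| stepAppR s t t' : step t t' -> step (app (lam s) t) (app (lam s) t').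

Inductive pow {X : Type} (R : X -> X -> Prop) : nat -> X -> X -> Prop :=
| powZero x : pow R 0 x x
| powSucc n x y z : R x y -> pow R n y z -> pow R (S n) x z.

Inductive com : Type :=
| retC
| varC (n : nat)
| lamC
| appC.

Definition Pro := list com.

Fixpoint gamma (s : term) : Pro :=
  match s with
  | var n => [varC n]
  | app s t => gamma s ++ gamma t ++ [appC]
  | lam s => lamC :: gamma s ++ [retC]
  end.

Definition represents (P : Pro) (s : term) : Prop :=
  exists u, P = gamma u /\ s = lam u.

Fixpoint jumpTarget (k : nat) (Q : Pro) (P : Pro) : option (Pro * Pro) :=
  match P with
  | retC :: P' => match k with
                  | 0 => Some (Q, P')
                  | S k' => jumpTarget k' (Q ++ [retC]) P'
                  end
  | lamC :: P' => jumpTarget (S k) (Q ++ [lamC]) P'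
  | c :: P' => jumpTarget k (Q ++ [c]) P'
  | [] => None
  end.

Definition phi (P : Pro) : option (Pro * Pro) := jumpTarget 0 [] P.

Definition clo : Type := (Pro * nat)%type.
Definition heapEntry : Type := (clo * nat)%type.
Definition heap : Type := list heapEntry.

(* H[a] for 1 <= a <= |H|, undefined otherwise *)
Definition heapGet (H : heap) (a : nat) : option heapEntry :=
  match a with
  | 0 => None
  | S a' => nth_error H a'
  end.

Fixpoint lookup (H : heap) (a : nat) (n : nat) : option clo :=
  match heapGet H a with
  | Some (g, b) => match n with
                   | 0 => Some g
                   | S n' => lookup H b n'
                   end
  | None => None
  end.

Inductive unfolds (H : heap) : nat -> nat -> term -> term -> Prop :=
| unfoldsBound a k n : n < k -> unfolds H a k (var n) (var n)
| unfoldsBind a k n P b u s' :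
    k <= n -> lookup H a (n - k) = Some (P, b) -> represents P u ->
    unfolds H b 0 u s' -> unfolds H a k (var n) s'
| unfoldsLam a k s s' : unfolds H a (S k) s s' -> unfolds H a k (lam s) (lam s')
| unfoldsApp a k s t s' t' :
    unfolds H a k s s' -> unfolds H a k t t' -> unfolds H a k (app s t) (app s' t').

Definition reprC (H : heap) (g : clo) (s : term) : Prop :=
  exists u, represents (fst g) u /\ unfolds H (snd g) 0 u s.

Definition state : Type := (list clo * list clo * heap)%type.

Inductive stepH : state -> state -> Prop :=
| stepVar P a n T V H g :
    lookup H a n = Some g ->
    stepH ((varC n :: P, a) :: T, V, H) ((P, a) :: T, g :: V, H)
| stepLam P a T V H Q P' :
    phi P = Some (Q, P') ->
    stepH ((lamC :: P, a) :: T, V, H) ((P', a) :: T, (Q, a) :: V, H)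
| stepApp P a T g Q b V H :
    stepH ((appC :: P, a) :: T, g :: (Q, b) :: V, H)
          ((Q, S (length H)) :: (P, a) :: T, V, H ++ [(g, b)])
| stepNil a T V H :
    stepH (([], a) :: T, V, H) (T, V, H).

Definition init (s : term) : state := ([(gamma s, 0)], [], []).

(* Main.v *)
Require Import Defs.
From Stdlib Require Import List Arith Lia.
Import ListNotations.

Lemma pow_trans {X} (R : X -> X -> Prop) n m x y z :
  pow R n x y -> pow R m y z -> pow R (n + m) x z.
Proof.
  induction 1; intros; simpl; auto.
  econstructor; eauto.
Qed.

Lemma pow_one {X} (R : X -> X -> Prop) x y : R x y -> pow R 1 x y.
Proof. intros; econstructor; eauto; constructor. Qed.

Lemma pow_lam k x t : pow step k (lam x) t -> k = 0 /\ t = lam x.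
Proof.
  intros Hp; inversion Hp; subst; auto.
  match goal with H : step (lam _) _ |- _ => inversion H end.
Qed.

Lemma decomp k s t v : pow step k (Defs.app s t) v -> (exists w, v = lam w) ->
  exists k1 k2 k3 a b, pow step k1 s (lam a) /\ pow step k2 t (lam b) /\
    pow step k3 (subst a 0 (lam b)) v /\ k = k1 + k2 + S k3.
Proof.
  revert s t; induction k; intros s t Hp [w Hw]; subst.
  - inversion Hp.
  - inversion Hp as [|? ? y ? Hst Hrest]; subst.
    inversion Hst; subst.
    + exists 0, 0, k, s0, t0. repeat split; try constructor; auto.
    + destruct (IHk _ _ Hrest (ex_intro _ w eq_refl)) as (k1&k2&k3&a&b&A&B&C&D).
      exists (S k1), k2, k3, a, b. repeat split; auto. econstructor; eauto. lia.
    + destruct (IHk _ _ Hrest (ex_intro _ w eq_refl)) as (k1&k2&k3&a&b&A&B&C&D).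
      apply pow_lam in A. destruct A as [-> A]. injection A as ->.
      exists 0, (S k2), k3, s0, b. repeat split; auto. constructor.
      econstructor; eauto. lia.
Qed.

Lemma jump_gamma s : forall k Q P,
  jumpTarget k Q (gamma s ++ P) = jumpTarget k (Q ++ gamma s) P.
Proof.
  induction s; intros; simpl.
  - reflexivity.
  - rewrite <- !app_assoc, IHs1, IHs2. simpl. rewrite <- !app_assoc. reflexivity.
  - rewrite <- !app_assoc. rewrite IHs. simpl. rewrite <- !app_assoc. reflexivity.
Qed.

Lemma phi_gamma s P : phi (gamma s ++ retC :: P) = Some (gamma s, P).
Proof. unfold phi. rewrite jump_gamma. reflexivity. Qed.

Lemma heapGet_app H H' a e : heapGet H a = Some e -> heapGet (H ++ H') a = Some e.
Proof.
  destruct a; simpl; try discriminate. intros E.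
  rewrite nth_error_app1; auto. apply nth_error_Some. congruence.
Qed.

Lemma lookup_app H H' n : forall a g, lookup H a n = Some g -> lookup (H ++ H') a n = Some g.
Proof.
  induction n; intros a g E; simpl in *;
  destruct (heapGet H a) as [[g0 b]|] eqn:E1; try discriminate;
  rewrite (heapGet_app _ H' _ _ E1); auto.
Qed.

Lemma unfolds_app H H' a k s t : unfolds H a k s t -> unfolds (H ++ H') a k s t.
Proof.
  induction 1.
  - constructor; auto.
  - eapply unfoldsBind; eauto. apply lookup_app; eauto.
  - constructor; auto.
  - constructor; auto.
Qed.

Lemma reprC_app H H' g s : reprC H g s -> reprC (H ++ H') g s.
Proof. intros [u [A B]]. exists u; split; auto. apply unfolds_app; auto. Qed.

Lemma bound_mono k s : bound k s -> forall k', k <= k' -> bound k' s.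
Proof.
  induction 1; intros; constructor; auto; try lia. apply IHbound; lia.
Qed.

Lemma unfolds_bound H a k s t : unfolds H a k s t -> bound k t.
Proof.
  induction 1; try (constructor; auto; fail).
  eapply bound_mono; eauto; lia.
Qed.

Lemma subst_bound k s : bound k s -> forall m u, k <= m -> subst s m u = s.
Proof.
  induction 1; intros m u Hm; simpl.
  - destruct (Nat.eqb_spec n m); auto; lia.
  - rewrite IHbound1, IHbound2; auto.
  - rewrite IHbound; auto; lia.
Qed.

Lemma bound_unfolds H a k s : bound k s -> unfolds H a k s s.
Proof. induction 1; constructor; auto. Qed.

Lemma unfolds_subst H b c g v u k' a' :
  unfolds H b k' u a' -> forall k, k' = S k ->
  heapGet H c = Some (g, b) -> reprC H g v ->
  unfolds H c k u (subst a' k v).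
Proof.
  induction 1; intros k0 Ek Hc Hg; subst.
  - simpl. destruct (Nat.eqb_spec n k0).
    + subst. destruct Hg as [u' [Hr Hu]]. destruct g as [P' b'].
      eapply unfoldsBind with (P := P') (b := b'); eauto.
      rewrite Nat.sub_diag. simpl. rewrite Hc. reflexivity.
    + constructor. lia.
  - rewrite (subst_bound 0 s'); [| eapply unfolds_bound; eauto | lia].
    eapply unfoldsBind; eauto; [lia|].
    replace (n - k0) with (S (n - S k0)) by lia. simpl. rewrite Hc. auto.
  - simpl. constructor. apply IHunfolds; auto.
  - simpl. constructor; auto.
Qed.

Lemma main : forall k s a H sb tb P T V,
  unfolds H a 0 s sb -> pow step k sb tb -> (exists w, tb = lam w) ->
  exists g H'', pow stepH (4 * k + 1) ((gamma s ++ P, a) :: T, V, H)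
                       ((P, a) :: T, g :: V, H ++ H'') /\ reprC (H ++ H'') g tb.
Proof.
  intros k. induction k as [k IH] using (well_founded_induction lt_wf).
  intros s a H sb tb P T V Hu Hp Hv.
  destruct s as [n | s1 s2 | s0].
  - inversion Hu; subst; [lia|].
    match goal with R : represents _ _ |- _ => destruct R as [u0 [-> ->]] end.
    match goal with R : unfolds _ _ 0 (lam _) _ |- _ => inversion R; subst end.
    apply pow_lam in Hp. destruct Hp as [-> ->].
    exists (gamma u0, b), []. rewrite app_nil_r. split.
    + apply pow_one. constructor. rewrite Nat.sub_0_r in *. auto.
    + exists (lam u0). split; simpl; auto. exists u0; auto.
  - inversion Hu; subst.
    destruct (decomp _ _ _ _ Hp Hv) as (k1&k2&k3&a1&b1&A&B&C&D).
    destruct (IH k1 ltac:(lia) s1 a H s' (lam a1) (gamma s2 ++ appC :: P) T V)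
      as (g1 & Hq1 & R1 & G1); auto. eauto.
    destruct (IH k2 ltac:(lia) s2 a (H ++ Hq1) t' (lam b1) (appC :: P) T (g1 :: V))
      as (g2 & Hq2 & R2 & G2); auto. apply unfolds_app; auto. eauto.
    destruct g1 as [Q b].
    assert (G1' := reprC_app _ Hq2 _ _ G1).
    destruct G1' as [u' [[u [EQ Eu]] Hu']]. simpl in *. subst.
    inversion Hu'; subst.
    set (Hq3 := (H ++ Hq1) ++ Hq2).
    assert (Hc : heapGet (Hq3 ++ [(g2, b)]) (S (length Hq3)) = Some (g2, b)).
    { simpl. rewrite nth_error_app2; [rewrite Nat.sub_diag; reflexivity| lia]. }
    assert (Hs : unfolds (Hq3 ++ [(g2, b)]) (S (length Hq3)) 0 u (subst a1 0 (lam b1))).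
    { eapply unfolds_subst; eauto. apply unfolds_app; eauto. apply reprC_app; auto. }
    destruct (IH k3 ltac:(lia) u (S (length Hq3)) (Hq3 ++ [(g2, b)]) _ tb [] ((P, a) :: T) V
      Hs C Hv) as (g3 & Hq4 & R3 & G3).
    exists g3, (Hq1 ++ Hq2 ++ [(g2, b)] ++ Hq4).
    assert (EH : H ++ Hq1 ++ Hq2 ++ [(g2, b)] ++ Hq4 = (Hq3 ++ [(g2, b)]) ++ Hq4).
    { unfold Hq3. rewrite <- !app_assoc. reflexivity. }
    rewrite EH. split; auto.
    match goal with |- pow _ ?n _ _ =>
      replace n with ((4 * k1 + 1) + ((4 * k2 + 1) + (1 + ((4 * k3 + 1) + 1)))) by lia end.
    simpl gamma.
    replace ((gamma s1 ++ gamma s2 ++ [appC]) ++ P) with (gamma s1 ++ gamma s2 ++ appC :: P)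
      by (rewrite <- !app_assoc; reflexivity).
    eapply pow_trans; [exact R1|].
    eapply pow_trans; [exact R2|].
    econstructor; [constructor|].
    rewrite app_nil_r in R3.
    eapply pow_trans; [exact R3|].
    apply pow_one. constructor.
  - inversion Hu; subst. apply pow_lam in Hp. destruct Hp as [-> ->].
    exists (gamma s0, a), []. rewrite app_nil_r. split.
    + apply pow_one. simpl. rewrite <- app_assoc. simpl. constructor.
      apply phi_gamma.
    + exists (lam s0). split; simpl; auto. exists s0; auto.
Qed.

Theorem theorem16 (s t : term) (k : nat) :
  closed s -> pow step k s t -> (exists u, t = lam u) ->
  exists (g : clo) (H : heap),
    pow stepH (4 * k + 2) (init s) ([], [g], H) /\ reprC H g t.
Proof.
  intros Hc Hp Hv.
  destruct (main k s 0 [] s t [] [] [] (bound_unfolds _ _ _ _ Hc) Hp Hv)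
    as (g & H'' & R & G).
  exists g, ([] ++ H''). split; [|exact G].
  replace (4 * k + 2) with ((4 * k + 1) + 1) by lia.
  unfold init. rewrite <- (app_nil_r (gamma s)).
  eapply pow_trans; [exact R|]. apply pow_one. constructor.
Qed.
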